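(* Let $\alpha>0$, $\beta>0$, $M\in\mathbb{R}$, let $(a,b)$ be a bounded interval, and let $v$ be a local minimizer of $\mathcal{G}(\alpha,\beta,Mx,(a,b),\cdot)$. If $M\ne0$, set $L_0:=2\bigl(\frac{\alpha}{\beta M^2}\bigr)^{1/3}$. Then: (1) If $M\ne0$ and $b-a>L_0$, then in $(a,b)$ there is either a jump point $x\in S_v$ or a point $y\in(a,b)\setminus S_v$ with $v(y)=My$. (2) If $x\in S_v$, then $v(x^+)-Mx=Mx-v(x^-)$, and if $M\ne0$ this value has the same sign as $M$. (3) If $x_1<x_2$ are consecutive jump points of $v$ (no other jump points in $(x_1,x_2)$), then $v(x)=M(x_1+x_2)/2$ for every $x\in(x_1,x_2)$. (4) If $M\ne0$ and $y_1<y_2<\dots<y_m$ are the points of $(a,b)$ where $v$ intersects the line $Mx$, then $y_2-y_1=y_3-y_2=\dots=y_m-y_{m-1}$.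
   Context: $S((a,b))$ is the space of step functions with finitely many jumps on $(a,b)$ (BV functions with zero diffuse derivative and finite jump set $S_u$); $u(x^\pm)$ are one-sided values, and $u(a),u(b)$ denote values near the endpoints. $\mathcal{G}(\alpha,\beta,f,(a,b),u)=\alpha\,\#(S_u\cap(a,b))+\beta\int_a^b(u-f)^2dx$, here with $f(x)=Mx$. A local minimizer is $v\in S((a,b))$ with $\mathcal{G}(\alpha,\beta,f,(a,b),v)\le\mathcal{G}(\alpha,\beta,f,(a,b),u)$ for every $u\in S((a,b))$ with $u(a)=v(a)$, $u(b)=v(b)$. An intersection point of $v$ with the line $Mx$ is a point $y\in(a,b)\setminus S_v$ with $v(y)=My$. *)

(* Defs.v *)
From Stdlib Require Import Reals Lra List Sorted.
From Coquelicot Require Import Coquelicot.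
Open Scope R_scope.

(* A step function on (a,b) with finitely many jumps is represented by
   - its jump list  s = [s_1; ...; s_k]  with a < s_1 < ... < s_k < b,
   - its value list c = [c_0; ...; c_k]  (value c_i on (s_i, s_{i+1}),
     with s_0 = a, s_{k+1} = b),
   consecutive values distinct, so that the jump set S_u is exactly s. *)
Definition is_step (a b : R) (s c : list R) : Prop :=
  length c = S (length s) /\
  Sorted Rlt (a :: s ++ b :: nil) /\
  (forall i, (i < length s)%nat -> nth i c 0 <> nth (S i) c 0).

Definition nle (s : list R) (x : R) : nat :=
  length (filter (fun t => if Rle_dec t x then true else false) s).
Definition nlt (s : list R) (x : R) : nat :=
  length (filter (fun t => if Rlt_dec t x then true else false) s).

(* pointwise representative (right-continuous at jumps; the values at the
   finitely many jump points are irrelevant for the integral) *)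
Definition sval (s c : list R) (x : R) : R := nth (nle s x) c 0.
Definition sval_r (s c : list R) (x : R) : R := nth (nle s x) c 0.
Definition sval_l (s c : list R) (x : R) : R := nth (nlt s x) c 0.
Definition sval_a (c : list R) : R := nth 0 c 0.
Definition sval_b (s c : list R) : R := nth (length s) c 0.

Definition Gfun (alpha beta : R) (f : R -> R) (a b : R) (s c : list R) : R :=
  alpha * INR (length s) + beta * RInt (fun x => (sval s c x - f x) ^ 2) a b.

Definition local_min (alpha beta : R) (f : R -> R) (a b : R) (s c : list R) : Prop :=
  is_step a b s c /\
  forall s' c', is_step a b s' c' ->
    sval_a c' = sval_a c -> sval_b s' c' = sval_b s c ->
    Gfun alpha beta f a b s c <= Gfun alpha beta f a b s' c'.

Definition inter_pt (M a b : R) (s c : list R) (y : R) : Prop :=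
  a < y < b /\ ~ In y s /\ sval s c y = M * y.

(* Main.v *)
Require Import Defs.
From Stdlib Require Import Reals Lra Lia List Sorted Classical.
From Coquelicot Require Import Coquelicot.
Open Scope R_scope.

Definition P3 (M d y : R) := d^2*y - d*M*y^2 + M^2*y^3/3.
Definition Q (M d u v : R) := P3 M d v - P3 M d u.

Lemma is_RInt_seg M d u v : is_RInt (fun x => (d - M*x)^2) u v (Q M d u v).
Proof.
  unfold Q.
  apply (is_RInt_derive (fun y => P3 M d y) (fun x => (d - M*x)^2)).
  - intros x _. unfold P3. auto_derive; [auto| field].
  - intros x _. apply (ex_derive_continuous (K:=R_AbsRing) (V:=R_NormedModule)). auto_derive. auto.
Qed.

Fixpoint sumn (f : nat -> R) (k : nat) : R :=
  match k with O => 0 | S k => sumn f k + f k end.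

Lemma sumn_ext f g k : (forall i, (i < k)%nat -> f i = g i) -> sumn f k = sumn g k.
Proof. induction k; simpl; intros H; auto. rewrite IHk by (intros; apply H; lia). rewrite H by lia. auto. Qed.

Lemma sumn_zero h k : (forall i, (i < k)%nat -> h i = 0) -> sumn h k = 0.
Proof. induction k; simpl; intros H; auto. rewrite IHk by (intros; apply H; lia). rewrite H by lia. ring. Qed.

Lemma sumn_single h k j : (forall i, (i < k)%nat -> i <> j -> h i = 0) -> (j < k)%nat -> sumn h k = h j.
Proof.
  induction k; simpl; intros H Hj; [lia|].
  destruct (Nat.eq_dec k j) as [->|Hne].
  - rewrite sumn_zero by (intros; apply H; lia). ring.
  - rewrite IHk; [rewrite (H k) by lia; ring| |lia]. intros i Hi1 Hi2. apply H; auto; lia.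
Qed.

Lemma sumn_double h k j1 j2 : (forall i, (i < k)%nat -> i <> j1 -> i <> j2 -> h i = 0) ->
  (j1 < k)%nat -> (j2 < k)%nat -> j1 <> j2 -> sumn h k = h j1 + h j2.
Proof.
  induction k; simpl; intros H H1 H2 Hn; [lia|].
  destruct (Nat.eq_dec k j1) as [->|Hne1].
  - rewrite (sumn_single h j1 j2); [ring| |lia]. intros i Hi1 Hi2. apply H; auto; lia.
  - destruct (Nat.eq_dec k j2) as [->|Hne2].
    + rewrite (sumn_single h j2 j1); [ring| |lia]. intros i Hi1 Hi2. apply H; auto; lia.
    + rewrite IHk; [rewrite (H k) by lia; ring| | lia| lia| auto]. intros i Hi1 Hi2 Hi3. apply H; auto; lia.
Qed.

Lemma sumn_minus f g k : sumn f k - sumn g k = sumn (fun i => f i - g i) k.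
Proof. induction k; simpl; [ring|]. rewrite <- IHk. ring. Qed.

Definition T (a b : R) (s : list R) (i : nat) : R := nth i (a :: s ++ b :: nil) 0.

Lemma T0 a b s : T a b s 0 = a. Proof. reflexivity. Qed.
Lemma TS a b s j : (j < length s)%nat -> T a b s (S j) = nth j s 0.
Proof. intros. unfold T. simpl. rewrite app_nth1; auto. Qed.
Lemma Tlast a b s : T a b s (S (length s)) = b.
Proof. unfold T. simpl. rewrite app_nth2 by lia. rewrite Nat.sub_diag. reflexivity. Qed.
Lemma len_T a b (s : list R) : length (a :: s ++ b :: nil) = S (S (length s)).
Proof. simpl. rewrite length_app. simpl. lia. Qed.

Lemma SS_nth (l : list R) : StronglySorted Rlt l ->
  forall i j, (i < j)%nat -> (j < length l)%nat -> nth i l 0 < nth j l 0.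
Proof.
  induction 1 as [|x l Hs IH Hf]; simpl; intros i j Hij Hj; [lia|].
  destruct j as [|j]; [lia|]. destruct i as [|i].
  - rewrite Forall_forall in Hf. apply Hf. apply nth_In. lia.
  - apply IH; lia.
Qed.

Lemma rs_nth (l : list R) : Sorted Rlt l ->
  forall i j, (i < j)%nat -> (j < length l)%nat -> nth i l 0 < nth j l 0.
Proof. intros H. apply SS_nth. apply Sorted_StronglySorted; auto. intros x y z; lra. Qed.

Lemma rs_sorted (l : list R) : (forall i, (S i < length l)%nat -> nth i l 0 < nth (S i) l 0) -> Sorted Rlt l.
Proof.
  induction l as [|x l IH]; intros H; constructor.
  - apply IH. intros i Hi. apply (H (S i)). simpl; lia.
  - destruct l as [|y l]; constructor. apply (H 0%nat). simpl; lia.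
Qed.

Lemma is_step_iff a b s c : is_step a b s c <->
  (length c = S (length s) /\
   (forall i, (i <= length s)%nat -> T a b s i < T a b s (S i)) /\
   (forall i, (i < length s)%nat -> nth i c 0 <> nth (S i) c 0)).
Proof.
  unfold is_step. split; intros (H1 & H2 & H3); repeat split; auto.
  - intros i Hi. apply rs_nth; auto. rewrite len_T. lia.
  - apply rs_sorted. rewrite len_T. intros i Hi. apply H2. lia.
Qed.

Lemma T_mono a b s : (forall i, (i <= length s)%nat -> T a b s i < T a b s (S i)) ->
  forall i j, (i < j)%nat -> (j <= S (length s))%nat -> T a b s i < T a b s j.
Proof.
  intros H i j Hij Hj. induction j; [lia|].
  destruct (Nat.eq_dec i j) as [->|Hn]; [apply H; lia|].
  apply Rlt_trans with (T a b s j); [apply IHj; lia| apply H; lia].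
Qed.

Lemma T_le a b s : (forall i, (i <= length s)%nat -> T a b s i < T a b s (S i)) ->
  forall i j, (i <= j)%nat -> (j <= S (length s))%nat -> T a b s i <= T a b s j.
Proof.
  intros H i j Hij Hj. destruct (Nat.eq_dec i j) as [->|]; [lra|].
  left; apply T_mono; auto; lia.
Qed.

Lemma count_split (P : R -> bool) (s : list R) i : (i <= length s)%nat ->
  (forall k, (k < i)%nat -> P (nth k s 0) = true) ->
  (forall k, (i <= k)%nat -> (k < length s)%nat -> P (nth k s 0) = false) ->
  length (filter P s) = i.
Proof.
  revert i; induction s as [|x s IH]; simpl; intros i Hi H1 H2.
  - lia.
  - destruct i as [|i].
    + rewrite (H2 0%nat) by lia. apply IH; [lia| intros; lia|].
      intros k Hk1 Hk2. apply (H2 (S k)); lia.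
    + rewrite (H1 0%nat) by lia. simpl. f_equal. apply IH; [lia| |].
      * intros k Hk. apply (H1 (S k)); lia.
      * intros k Hk1 Hk2. apply (H2 (S k)); lia.
Qed.

Section Seg.
Variables (a b : R) (s : list R).
Hypothesis Hinc : forall i, (i <= length s)%nat -> T a b s i < T a b s (S i).

Lemma nle_seg i y : (i <= length s)%nat -> T a b s i < y < T a b s (S i) -> nle s y = i.
Proof.
  intros Hi Hy. unfold nle. apply count_split; auto.
  - intros k Hk. rewrite <- (TS a b) by lia. destruct Rle_dec as [|n]; auto.
    exfalso; apply n. assert (T a b s (S k) <= T a b s i) by (apply T_le; auto; lia). lra.
  - intros k Hk1 Hk2. rewrite <- (TS a b) by lia. destruct Rle_dec as [r|]; auto.
    assert (T a b s (S i) <= T a b s (S k)) by (apply T_le; auto; lia). lra.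
Qed.

Lemma nle_jump j : (j < length s)%nat -> nle s (T a b s (S j)) = S j.
Proof.
  intros Hj. unfold nle. apply count_split; [lia| |].
  - intros k Hk. rewrite <- (TS a b) by lia. destruct Rle_dec as [|n]; auto.
    exfalso; apply n. apply T_le; auto; lia.
  - intros k Hk1 Hk2. rewrite <- (TS a b) by lia. destruct Rle_dec as [r|]; auto.
    assert (T a b s (S j) < T a b s (S k)) by (apply T_mono; auto; lia). lra.
Qed.

Lemma nlt_jump j : (j < length s)%nat -> nlt s (T a b s (S j)) = j.
Proof.
  intros Hj. unfold nlt. apply count_split; [lia| |].
  - intros k Hk. rewrite <- (TS a b) by lia. destruct Rlt_dec as [|n]; auto.
    exfalso; apply n. apply T_mono; auto; lia.
  - intros k Hk1 Hk2. rewrite <- (TS a b) by lia. destruct Rlt_dec as [r|]; auto.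
    assert (T a b s (S j) <= T a b s (S k)) by (apply T_le; auto; lia). lra.
Qed.
End Seg.

Definition cost M a b s c :=
  sumn (fun i => Q M (nth i c 0) (T a b s i) (T a b s (S i))) (S (length s)).

Lemma RInt_cost M a b s c : is_step a b s c ->
  RInt (fun x => (sval s c x - M * x) ^ 2) a b = cost M a b s c.
Proof.
  intros Hs. apply is_step_iff in Hs. destruct Hs as (Hl & Hinc & Hd).
  apply is_RInt_unique.
  assert (forall k, (k <= S (length s))%nat ->
    is_RInt (fun x => (sval s c x - M * x) ^ 2) a (T a b s k)
      (sumn (fun i => Q M (nth i c 0) (T a b s i) (T a b s (S i))) k)).
  { induction k; intros Hk.
    - simpl. rewrite T0. exact (is_RInt_point (V:=R_NormedModule) _ a).
    - simpl. apply (is_RInt_Chasles (V:=R_NormedModule) _ a (T a b s k)); [apply IHk; lia|].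
      apply (is_RInt_ext (fun x => (nth k c 0 - M*x)^2)).
      + intros x Hx. rewrite Rmin_left, Rmax_right in Hx by (left; apply Hinc; lia).
        unfold sval. rewrite (nle_seg a b s Hinc k) by (lia || lra). reflexivity.
      + apply is_RInt_seg. }
  pose proof (H (S (length s)) (le_n _)) as H'. rewrite Tlast in H'. exact H'.
Qed.

Lemma Gfun_cost alpha beta M a b s c : is_step a b s c ->
  Gfun alpha beta (fun x => M * x) a b s c = alpha * INR (length s) + beta * cost M a b s c.
Proof. intros H. unfold Gfun. rewrite RInt_cost; auto. Qed.


Definition repl (l : list R) j x := firstn j l ++ x :: skipn (S j) l.

Lemma repl_len l j x : (j < length l)%nat -> length (repl l j x) = length l.
Proof.
  revert j; induction l as [|y l IH]; intros j Hj; simpl in *; [lia|].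
  destruct j; simpl; auto. unfold repl in IH. rewrite IH; auto. lia.
Qed.

Lemma repl_nth l j x i : (j < length l)%nat ->
  nth i (repl l j x) 0 = if Nat.eq_dec i j then x else nth i l 0.
Proof.
  revert i j; induction l as [|y l IH]; intros i j Hj; simpl in *; [lia|].
  destruct j; destruct i; simpl; auto.
  unfold repl in IH. rewrite IH by lia.
  destruct (Nat.eq_dec i j); destruct (Nat.eq_dec (S i) (S j)); auto; lia.
Qed.

Lemma repl_app l m j x : (j < length l)%nat -> repl (l ++ m) j x = repl l j x ++ m.
Proof.
  revert j; induction l as [|y l IH]; intros j Hj; simpl in *; [lia|].
  destruct j; [reflexivity|].
  change (repl (y :: l ++ m) (S j) x) with (y :: repl (l ++ m) j x).
  change (repl (y :: l) (S j) x) with (y :: repl l j x). rewrite IH by lia. reflexivity.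
Qed.

Lemma T_repl a b s j t i : (j < length s)%nat ->
  T a b (repl s j t) i = if Nat.eq_dec i (S j) then t else T a b s i.
Proof.
  intros Hj. unfold T.
  replace (a :: repl s j t ++ b :: nil) with (repl (a :: s ++ b :: nil) (S j) t).
  2:{ change (repl (a :: s ++ b :: nil) (S j) t) with (a :: repl (s ++ b :: nil) j t).
      rewrite repl_app; auto. }
  apply repl_nth. rewrite len_T. lia.
Qed.

Lemma quad_lemma D E M r : 0 < r ->
  (forall d, -r < d < r -> 0 <= D * d * (E - M * d)) -> D * E = 0 /\ D * M <= 0.
Proof.
  intros Hr H.
  assert (HDE : D * E = 0).
  { destruct (Req_dec (D*E) 0) as [|Hne]; auto. exfalso.
    set (A := D*E). set (B := D*M).
    set (eta := Rmin (r/2) (Rabs A / (2 * (Rabs B + 1)))).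
    assert (He1 : eta <= r/2) by apply Rmin_l.
    assert (He2 : eta <= Rabs A / (2 * (Rabs B + 1))) by apply Rmin_r.
    assert (HA : 0 < Rabs A) by (apply Rabs_pos_lt; auto).
    assert (HB : 0 <= Rabs B) by apply Rabs_pos.
    assert (He0 : 0 < eta).
    { unfold eta, Rmin. destruct Rle_dec; [lra|]. apply Rdiv_lt_0_compat; lra. }
    assert (He3 : eta * (Rabs B + 1) <= Rabs A / 2).
    { apply Rmult_le_compat_r with (r := Rabs B + 1) in He2; [|lra].
      replace (Rabs A / (2 * (Rabs B + 1)) * (Rabs B + 1)) with (Rabs A / 2) in He2 by (field; lra).
      lra. }
    assert (HBb : - Rabs B <= B) by (pose proof (Rle_abs (-B)) as HH; rewrite Rabs_Ropp in HH; lra).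
    assert (Hx: eta*(Rabs B+1) = eta*Rabs B + eta) by ring.
    destruct (Rle_lt_dec 0 A) as [HA0|HA0].
    - assert (0 <= D * (-eta) * (E - M * (-eta))) by (apply H; lra).
      rewrite (Rabs_right A) in * by lra.
      assert (D * (-eta) * (E - M * (-eta)) = - eta * (A + B * eta)) by (unfold A, B; ring).
      assert (B*eta >= - Rabs B * eta) by nra.
      assert (eta*(A+B*eta) > 0) by (apply Rmult_lt_0_compat; lra). lra.
    - assert (0 <= D * eta * (E - M * eta)) by (apply H; lra).
      rewrite (Rabs_left A) in * by lra.
      assert (D * eta * (E - M * eta) = eta * (A - B * eta)) by (unfold A, B; ring).
      assert (B*eta >= - Rabs B * eta) by nra.
      assert (eta*(-A+B*eta) > 0) by (apply Rmult_lt_0_compat; lra). lra. }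
  split; auto.
  assert (0 <= D * (r/2) * (E - M * (r/2))) by (apply H; lra).
  assert (D * (r/2) * (E - M * (r/2)) = - (D*M) * (r/2)^2 + (D*E) * (r/2)) by ring.
  rewrite HDE in *. assert ((r/2)^2 > 0) by (apply pow_lt; lra).
  destruct (Rle_lt_dec (D*M) 0); auto.
  assert (D*M*(r/2)^2 > 0) by (apply Rmult_lt_0_compat; lra). lra.
Qed.


Lemma jump_idx alpha beta M a b s c j : 0 < beta ->
  local_min alpha beta (fun x => M * x) a b s c -> (j < length s)%nat ->
  (nth j c 0 - nth (S j) c 0) * (nth j c 0 + nth (S j) c 0 - 2 * M * T a b s (S j)) = 0 /\
  (nth j c 0 - nth (S j) c 0) * M <= 0.
Proof.
  intros Hb [Hs Hm] Hj. pose proof Hs as Hs'. apply is_step_iff in Hs' as (Hl & Hinc & Hd).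
  set (x := T a b s (S j)).
  assert (H1 : T a b s j < x) by (apply Hinc; lia).
  assert (H2 : x < T a b s (S (S j))) by (apply Hinc; lia).
  set (r := Rmin (x - T a b s j) (T a b s (S (S j)) - x)).
  assert (Hr1 : r <= x - T a b s j) by apply Rmin_l.
  assert (Hr2 : r <= T a b s (S (S j)) - x) by apply Rmin_r.
  assert (Hr : 0 < r) by (unfold r, Rmin; destruct Rle_dec; lra).
  apply quad_lemma with r; auto. intros d Hdd.
  set (t := x + d).
  assert (Hs2 : is_step a b (repl s j t) c).
  { apply is_step_iff. rewrite repl_len by auto. split; [auto| split; [|auto]].
    intros i Hi. rewrite !T_repl by auto.
    destruct (Nat.eq_dec i (S j)); destruct (Nat.eq_dec (S i) (S j)); try lia.
    - subst i. unfold t; lra.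
    - assert (i = j) by lia. subst i. unfold t; lra.
    - apply Hinc; lia. }
  specialize (Hm _ _ Hs2 eq_refl).
  unfold sval_b in Hm. rewrite repl_len in Hm by auto. specialize (Hm eq_refl).
  rewrite !Gfun_cost in Hm by auto. rewrite repl_len in Hm by auto.
  assert (Hc : cost M a b (repl s j t) c - cost M a b s c =
     (nth j c 0 - nth (S j) c 0) * d * ((nth j c 0 + nth (S j) c 0 - 2 * M * x) - M * d)).
  { unfold cost. rewrite repl_len by auto. rewrite sumn_minus.
    rewrite (sumn_double _ _ j (S j)); try lia.
    - rewrite !T_repl by auto.
      repeat destruct Nat.eq_dec; try lia. fold x. unfold Q, P3, t. ring.
    - intros i Hi1 Hi2 Hi3. rewrite !T_repl by auto.
      repeat destruct Nat.eq_dec; try lia. ring. }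
  assert (beta * cost M a b s c <= beta * cost M a b (repl s j t) c) by lra.
  apply Rmult_le_reg_l in H; auto. fold x. lra.
Qed.

Lemma pick3 (x y m c : R) : c <> m -> exists k, (k = 0 \/ k = 1/3 \/ k = 2/3) /\
  m + k * (c - m) <> x /\ m + k * (c - m) <> y.
Proof.
  intros Hc.
  destruct (Req_dec (m + 0 * (c - m)) x); destruct (Req_dec (m + 0 * (c - m)) y).
  - exists (1/3). split; [auto|]. split; intros E; apply Hc; nra.
  - destruct (Req_dec (m + 1/3 * (c - m)) y).
    + exists (2/3). split; [auto|]. split; intros E; apply Hc; nra.
    + exists (1/3). split; [auto|]. split; auto. intros E; apply Hc; nra.
  - destruct (Req_dec (m + 1/3 * (c - m)) x).
    + exists (2/3). split; [auto|]. split; intros E; apply Hc; nra.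
    + exists (1/3). split; [auto|]. split; auto. intros E; apply Hc; nra.
  - exists 0. auto.
Qed.

Lemma seg_idx alpha beta M a b s c i : 0 < beta ->
  local_min alpha beta (fun x => M * x) a b s c -> (S i < length s)%nat ->
  nth (S i) c 0 = M * (T a b s (S i) + T a b s (S (S i))) / 2.
Proof.
  intros Hb [Hs Hm] Hi. pose proof Hs as Hs'. apply is_step_iff in Hs' as (Hl & Hinc & Hd).
  set (u := T a b s (S i)). set (v := T a b s (S (S i))).
  assert (Huv : u < v) by (apply Hinc; lia).
  set (m := M * (u + v) / 2).
  assert (Key : forall d, d <> nth i c 0 -> d <> nth (S (S i)) c 0 ->
     (nth (S i) c 0 - m)^2 <= (d - m)^2).
  { intros d Hd1 Hd2.
    assert (Hs2 : is_step a b s (repl c (S i) d)).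
    { apply is_step_iff. rewrite repl_len by lia. split; [auto| split; [auto|]].
      intros k Hk. rewrite !repl_nth by lia.
      destruct (Nat.eq_dec k (S i)); destruct (Nat.eq_dec (S k) (S i)); try lia.
      - subst k. auto.
      - assert (k = i) by lia. subst k. auto.
      - apply Hd; lia. }
    specialize (Hm _ _ Hs2).
    unfold sval_a, sval_b in Hm. rewrite !repl_nth in Hm by lia.
    destruct (Nat.eq_dec 0 (S i)); [lia|]. destruct (Nat.eq_dec (length s) (S i)); [lia|].
    specialize (Hm eq_refl eq_refl).
    rewrite !Gfun_cost in Hm by auto.
    assert (Hc : cost M a b s (repl c (S i) d) - cost M a b s c =
       (v - u) * ((d - m)^2 - (nth (S i) c 0 - m)^2)).
    { unfold cost. rewrite sumn_minus.
      rewrite (sumn_single _ _ (S i)); try lia.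
      - rewrite !repl_nth by lia. destruct Nat.eq_dec; [|lia]. fold u v. unfold Q, P3, m. field.
      - intros k Hk1 Hk2. rewrite !repl_nth by lia. destruct Nat.eq_dec; [lia|]. ring. }
    assert (beta * cost M a b s c <= beta * cost M a b s (repl c (S i) d)) by lra.
    apply Rmult_le_reg_l in H; auto.
    assert (0 <= (v - u) * ((d - m)^2 - (nth (S i) c 0 - m)^2)) by lra.
    apply Rmult_le_reg_l with (v - u); [lra|]. lra. }
  fold m. destruct (Req_dec (nth (S i) c 0) m) as [|Hne]; auto. exfalso.
  destruct (pick3 (nth i c 0) (nth (S (S i)) c 0) m (nth (S i) c 0) Hne) as (k & Hk & Hk1 & Hk2).
  specialize (Key _ Hk1 Hk2).
  replace (m + k * (nth (S i) c 0 - m) - m) with (k * (nth (S i) c 0 - m)) in Key by ring.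
  assert (Hne' : nth (S i) c 0 - m <> 0) by lra.
  assert (0 < (nth (S i) c 0 - m)^2) by (pose proof (Rsqr_pos_lt _ Hne'); unfold Rsqr in *; lra).
  rewrite Rpow_mult_distr in Key.
  destruct Hk as [-> | [-> | ->]]; nra.
Qed.


Lemma sorted_le (l : list R) : Sorted Rlt l ->
  forall i j, (i <= j)%nat -> (j < length l)%nat -> nth i l 0 <= nth j l 0.
Proof.
  intros H i j Hij Hj. destruct (Nat.eq_dec i j) as [->|]; [lra|].
  left; apply rs_nth; auto; lia.
Qed.

Lemma In_s_T a b s x : In x s -> exists j, (j < length s)%nat /\ T a b s (S j) = x.
Proof.
  intros H. destruct (In_nth s x 0 H) as (j & Hj & E). exists j. split; auto.
  rewrite TS; auto.
Qed.

Lemma locate a b s y : (forall i, (i <= length s)%nat -> T a b s i < T a b s (S i)) ->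
  a < y < b -> ~ In y s -> exists i, (i <= length s)%nat /\ T a b s i < y < T a b s (S i).
Proof.
  intros Hinc Hy Hn.
  assert (forall k, (k <= S (length s))%nat -> y < T a b s k ->
     exists i, (i < k)%nat /\ T a b s i < y < T a b s (S i)).
  { induction k; intros Hk Hyk.
    - rewrite T0 in Hyk. lra.
    - destruct k as [|k].
      + exists 0%nat. rewrite T0. split; [lia|lra].
      + destruct (Rlt_le_dec y (T a b s (S k))) as [Hl|Hl].
        * destruct (IHk ltac:(lia) Hl) as (i & Hi & Hi2). exists i. split; [lia|auto].
        * destruct Hl as [Hl|He].
          -- exists (S k). split; [lia|]. split; auto.
          -- exfalso. apply Hn. rewrite <- He. rewrite TS by lia. apply nth_In. lia. }
  destruct (H (S (length s)) (le_n _)) as (i & Hi & Hi2); [rewrite Tlast; lra|].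
  exists i; split; [lia|auto].
Qed.


Lemma jump_E alpha beta M a b s c j : 0 < beta ->
  local_min alpha beta (fun x => M * x) a b s c -> (j < length s)%nat ->
  nth j c 0 + nth (S j) c 0 = 2 * M * T a b s (S j) /\
  (nth j c 0 - nth (S j) c 0) * M <= 0 /\ nth j c 0 <> nth (S j) c 0.
Proof.
  intros Hb Hm Hj. destruct (jump_idx alpha beta M a b s c j Hb Hm Hj) as [H1 H2].
  pose proof Hm as [Hs _]. apply is_step_iff in Hs as (_ & _ & Hd).
  specialize (Hd j Hj).
  apply Rmult_integral in H1. destruct H1 as [H1|H1]; [exfalso; apply Hd; lra|].
  repeat split; auto; lra.
Qed.

Lemma part2 alpha beta M a b s c : 0 < beta ->
  local_min alpha beta (fun x => M * x) a b s c ->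
  forall x, In x s ->
     sval_r s c x - M * x = M * x - sval_l s c x /\
     (0 < M -> 0 < sval_r s c x - M * x) /\
     (M < 0 -> sval_r s c x - M * x < 0).
Proof.
  intros Hb Hm x Hx. destruct (In_s_T a b s x Hx) as (j & Hj & <-).
  pose proof Hm as [Hs _]. apply is_step_iff in Hs as (_ & Hinc & _).
  unfold sval_r, sval_l. rewrite (nle_jump a b s Hinc j Hj), (nlt_jump a b s Hinc j Hj).
  destruct (jump_E alpha beta M a b s c j Hb Hm Hj) as (E & Hs & Hd).
  split; [lra|]. split; intros HM.
  - destruct (Rle_lt_dec (nth j c 0 - nth (S j) c 0) 0) as [H|H].
    + destruct H; [lra| exfalso; apply Hd; lra].
    + assert (0 < (nth j c 0 - nth (S j) c 0) * M) by (apply Rmult_lt_0_compat; lra). lra.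
  - destruct (Rle_lt_dec 0 (nth j c 0 - nth (S j) c 0)) as [H|H].
    + destruct H; [|exfalso; apply Hd; lra].
      lra.
    + assert (0 < (-(nth j c 0 - nth (S j) c 0)) * (- M)) by (apply Rmult_lt_0_compat; lra). lra.
Qed.

Lemma part3 alpha beta M a b s c : 0 < beta ->
  local_min alpha beta (fun x => M * x) a b s c ->
  forall x1 x2, In x1 s -> In x2 s -> x1 < x2 ->
     (forall z, In z s -> ~ (x1 < z < x2)) ->
     forall x, x1 < x < x2 -> sval s c x = M * (x1 + x2) / 2.
Proof.
  intros Hb Hm x1 x2 H1 H2 H12 Hno x Hx.
  destruct (In_s_T a b s x1 H1) as (j1 & Hj1 & <-).
  destruct (In_s_T a b s x2 H2) as (j2 & Hj2 & <-).
  pose proof Hm as [Hs _]. apply is_step_iff in Hs as (_ & Hinc & _).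
  assert (j1 < j2)%nat.
  { destruct (Nat.lt_ge_cases j1 j2); auto.
    assert (T a b s (S j2) <= T a b s (S j1)) by (apply T_le; auto; lia). lra. }
  assert (j2 = S j1).
  { destruct (Nat.eq_dec j2 (S j1)); auto. exfalso.
    apply (Hno (T a b s (S (S j1)))).
    - rewrite TS by lia. apply nth_In. lia.
    - split; apply T_mono; auto; lia. }
  subst j2. unfold sval. rewrite (nle_seg a b s Hinc (S j1)) by (lia || lra).
  apply (seg_idx alpha beta M a b s c j1 Hb Hm Hj2).
Qed.


Lemma sq_far M a b c0 : a < b -> M <> 0 -> (forall y, a < y < b -> c0 <> M * y) ->
  (M * (b - a) / 2)^2 <= (c0 - M * (a + b) / 2)^2.
Proof.
  intros Hab HM H.
  destruct (Rlt_or_le 0 M) as [HM0|HM0].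
  - assert (c0 <= M * a \/ M * b <= c0).
    { destruct (Rle_or_lt c0 (M*a)); auto. destruct (Rle_or_lt (M*b) c0); auto.
      exfalso. apply (H (c0 / M)); [|field; auto]. split.
      + apply Rmult_lt_reg_l with M; auto. replace (M * (c0/M)) with c0 by (field; auto). lra.
      + apply Rmult_lt_reg_l with M; auto. replace (M * (c0/M)) with c0 by (field; auto). lra. }
    assert (0 < M * (b - a)) by (apply Rmult_lt_0_compat; lra).
    destruct H0; nra.
  - assert (HM1 : M < 0) by (destruct HM0; auto; contradiction).
    assert (c0 <= M * b \/ M * a <= c0).
    { destruct (Rle_or_lt c0 (M*b)); auto. destruct (Rle_or_lt (M*a) c0); auto.
      exfalso. apply (H (c0 / M)); [|field; auto]. split.
      + apply Rmult_lt_reg_l with (-M); [lra|]. replace (-M * (c0/M)) with (-c0) by (field; auto). lra.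
      + apply Rmult_lt_reg_l with (-M); [lra|]. replace (-M * (c0/M)) with (-c0) by (field; auto). lra. }
    assert (0 < - M * (b - a)) by (apply Rmult_lt_0_compat; lra).
    destruct H0; nra.
Qed.

Lemma cube_root K : 0 < K -> Rpower K (1/3) ^ 3 = K /\ 0 < Rpower K (1/3).
Proof.
  intros HK. split.
  - rewrite <- Rpower_pow by (unfold Rpower; apply exp_pos).
    rewrite Rpower_mult. replace (1/3 * INR 3) with 1 by (simpl; field). apply Rpower_1; auto.
  - unfold Rpower; apply exp_pos.
Qed.

Lemma part1 alpha beta M a b s c : 0 < alpha -> 0 < beta -> a < b ->
  local_min alpha beta (fun x => M * x) a b s c ->
  (M <> 0 -> b - a > 2 * Rpower (alpha / (beta * M ^ 2)) (1 / 3) ->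
     (exists x, In x s) \/ (exists y, inter_pt M a b s c y)).
Proof.
  intros Ha Hb Hab Hm HM HL.
  destruct s as [|x s]; [| left; exists x; simpl; auto].
  right. apply NNPP. intros Hno.
  pose proof Hm as [Hs Hmin]. pose proof Hs as Hs'. apply is_step_iff in Hs' as (Hl & _ & _).
  destruct c as [|c0 c]; [discriminate|]. destruct c; [|discriminate].
  assert (Hfar : forall y, a < y < b -> c0 <> M * y).
  { intros y Hy E. apply Hno. exists y. refine (conj Hy (conj _ _)); [simpl; tauto| exact E]. }
  set (L := b - a). set (K := alpha / (beta * M ^ 2)).
  assert (HM2 : 0 < M^2) by (apply pow_lt_1_compat || (simpl; rewrite Rmult_1_r; apply Rsqr_pos_lt in HM; unfold Rsqr in HM; lra)).
  assert (HK : 0 < K) by (unfold K; apply Rdiv_lt_0_compat; [auto| apply Rmult_lt_0_compat; auto]).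
  destruct (cube_root K HK) as [HR3 HR0]. set (R0 := Rpower K (1/3)) in *.
  assert (HL3 : 8 * K < L^3).
  { rewrite <- HR3. fold K in HL. fold R0 in HL. unfold L in *.
    assert (L3: (b-a)^3 - 8*R0^3 = (b - a - 2*R0) * ((b-a)^2 + 2*(b-a)*R0 + 4*R0^2)) by ring.
    assert (0 < (b - a - 2*R0) * ((b-a)^2 + 2*(b-a)*R0 + 4*R0^2)).
    { apply Rmult_lt_0_compat; [lra|]. nra. }
    lra. }
  assert (HL0 : 0 < L) by (unfold L; lra).
  set (e := (L^3 - 8*K) / (4 * L^2)).
  assert (HLL : 0 < L^2) by nra.
  assert (He0 : 0 < e) by (unfold e; apply Rdiv_lt_0_compat; lra).
  assert (He1 : 2 * e < L).
  { unfold e. apply Rmult_lt_reg_r with (4 * L^2); [lra|].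
    replace (2 * ((L ^ 3 - 8 * K) / (4 * L ^ 2)) * (4 * L ^ 2)) with (2 * (L^3 - 8*K)) by (field; lra).
    replace (L * (4 * L^2)) with (4 * L^3) by ring. assert (0 < L^3) by nra. lra. }
  assert (HLe : (L - 2*e) * L^2 = (L^3 + 8*K)/2) by (unfold e; field; lra).
  set (p := a + e). set (q := b - e). set (m := M * (a + b) / 2).
  assert (Hmc : c0 <> m) by (unfold m; replace (M * (a + b) / 2) with (M * ((a+b)/2)) by field; apply Hfar; lra).
  assert (Hs2 : is_step a b (p :: q :: nil) (c0 :: m :: c0 :: nil)).
  { apply is_step_iff. simpl. split; [auto| split].
    - intros i Hi. unfold T. simpl.
      destruct i as [|[|[|i]]]; simpl; unfold p, q, L in *; lra || lia.
    - intros i Hi. destruct i as [|[|i]]; simpl; auto. lia. }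
  specialize (Hmin _ _ Hs2 eq_refl eq_refl).
  rewrite !Gfun_cost in Hmin by auto.
  unfold cost, T in Hmin. simpl in Hmin.
  assert (Hq : Q M c0 a b - (Q M c0 a p + Q M m p q + Q M c0 q b) = (q - p) * (c0 - m)^2).
  { unfold Q, P3, m, p, q. field. }
  assert (Hfar2 := sq_far M a b c0 Hab HM Hfar). fold m in Hfar2.
  assert (Hqp : q - p = L - 2 * e) by (unfold q, p, L; ring).
  assert (H1 : beta * ((q - p) * (c0 - m)^2) <= 2 * alpha).
  { replace (INR 0) with 0 in Hmin by reflexivity.
    replace (INR 2) with 2 in Hmin by (simpl; ring). nra. }
  assert (H2 : (q - p) * (M * L / 2)^2 <= (q - p) * (c0 - m)^2).
  { apply Rmult_le_compat_l; [lra|]. unfold L. exact Hfar2. }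
  assert (H3 : (q - p) * (M * L / 2)^2 = M^2 * ((L^3 + 8*K)/2) / 4).
  { rewrite Hqp. rewrite <- HLe. field. }
  assert (H4 : beta * M^2 * K = alpha) by (unfold K; field; split; lra || (intro; subst; lra)).
  assert (beta * (M^2 * ((L^3 + 8*K)/2) / 4) <= 2 * alpha).
  { rewrite <- H3. apply Rle_trans with (beta * ((q - p) * (c0 - m)^2)); auto.
    apply Rmult_le_compat_l; lra. }
  assert (beta * M^2 * (L^3 - 8*K) > 0) by (apply Rmult_lt_0_compat; [apply Rmult_lt_0_compat|]; lra).
  nra.
Qed.


Lemma part4 alpha beta M a b s c : 0 < beta ->
  local_min alpha beta (fun x => M * x) a b s c ->
  (M <> 0 -> forall ys : list R, Sorted Rlt ys ->
     (forall y, In y ys <-> inter_pt M a b s c y) ->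
     forall i, (S (S i) < length ys)%nat ->
       nth (S i) ys 0 - nth i ys 0 = nth (S (S i)) ys 0 - nth (S i) ys 0).
Proof.
  intros Hb Hm HM ys Hys Hiff i Hi.
  pose proof Hm as [Hs _]. apply is_step_iff in Hs as (Hl & Hinc & Hd).
  set (n := length s) in *.
  set (z := fun k => nth k c 0 / M).
  assert (F1 : forall j, (j < n)%nat -> z j + z (S j) = 2 * T a b s (S j)).
  { intros j Hj. destruct (jump_E alpha beta M a b s c j Hb Hm Hj) as (E & _ & _).
    unfold z. replace (nth j c 0 / M + nth (S j) c 0 / M) with ((nth j c 0 + nth (S j) c 0)/M) by (field; auto).
    rewrite E. field. auto. }
  assert (F2 : forall j, (j < n)%nat -> z j < z (S j)).
  { intros j Hj. destruct (jump_E alpha beta M a b s c j Hb Hm Hj) as (_ & H1 & H2).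
    assert (H3 : (nth j c 0 - nth (S j) c 0) * M <> 0).
    { apply Rmult_integral_contrapositive. split; auto. intro; apply H2; lra. }
    assert (H4 : 0 < M^2) by (pose proof (Rsqr_pos_lt _ HM); unfold Rsqr in *; simpl; lra).
    assert (H5 : z (S j) - z j = - ((nth j c 0 - nth (S j) c 0) * M) / M^2) by (unfold z; field; auto).
    assert (0 < - ((nth j c 0 - nth (S j) c 0) * M) / M^2) by (apply Rdiv_lt_0_compat; lra).
    lra. }
  assert (F3 : forall i0, (S i0 < n)%nat -> 2 * z (S i0) = T a b s (S i0) + T a b s (S (S i0))).
  { intros i0 Hi0. unfold z. rewrite (seg_idx alpha beta M a b s c i0 Hb Hm Hi0). field. auto. }
  assert (Ar : forall k, (k < n)%nat -> z (S k) - z k = z 1%nat - z 0%nat).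
  { induction k; intros Hk; auto.
    rewrite <- IHk by lia.
    pose proof (F1 k ltac:(lia)). pose proof (F1 (S k) Hk). pose proof (F3 k Hk). lra. }
  set (h := z 1%nat - z 0%nat) in *.
  assert (Fo : forall k, (k <= n)%nat -> z k = z 0%nat + INR k * h).
  { induction k; intros Hk; [simpl; ring|].
    rewrite S_INR. pose proof (Ar k ltac:(lia)). rewrite IHk in * by lia. lra. }
  assert (Zm : forall ka kb, (ka < kb)%nat -> (kb <= n)%nat -> z ka < z kb).
  { intros ka kb H1 H2. rewrite (Fo ka), (Fo kb) by lia.
    assert (0 < h) by (unfold h; pose proof (F2 0%nat ltac:(lia)); lra).
    apply lt_INR in H1. assert (0 < (INR kb - INR ka) * h) by (apply Rmult_lt_0_compat; lra). lra. }
  assert (Ich : forall y, inter_pt M a b s c y -> exists k, (k <= n)%nat /\ y = z k).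
  { intros y (Hy & Hn & Hv). destruct (locate a b s y Hinc Hy Hn) as (k & Hk & Hk2).
    exists k. split; auto. unfold sval in Hv. rewrite (nle_seg a b s Hinc k) in Hv by auto.
    unfold z. rewrite Hv. field. auto. }
  assert (Iint : forall k, (1 <= k)%nat -> (k < n)%nat -> inter_pt M a b s c (z k)).
  { intros k Hk1 Hk2. destruct k as [|k0]; [lia|].
    pose proof (F3 k0 Hk2) as E.
    assert (Ha1 : T a b s (S k0) < T a b s (S (S k0))) by (apply Hinc; lia).
    assert (Hz1 : T a b s (S k0) < z (S k0) < T a b s (S (S k0))) by lra.
    split; [|split].
    - assert (a <= T a b s (S k0)) by (rewrite <- (T0 a b s); apply T_le; auto; lia).
      assert (HH := T_le a b s Hinc (S (S k0)) (S (length s)) ltac:(lia) ltac:(lia)).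
      rewrite Tlast in HH.
      lra.
    - intros HI. destruct (In_s_T a b s _ HI) as (j & Hj & Ej).
      destruct (Nat.le_gt_cases (S j) (S k0)).
      + assert (T a b s (S j) <= T a b s (S k0)) by (apply T_le; auto; lia). lra.
      + assert (T a b s (S (S k0)) <= T a b s (S j)) by (apply T_le; auto; lia). lra.
    - unfold sval. rewrite (nle_seg a b s Hinc (S k0)) by (lia || lra).
      unfold z. field. auto. }
  assert (Elt : forall l, (l < length ys)%nat -> exists k, (k <= n)%nat /\ nth l ys 0 = z k).
  { intros l Hl'. apply Ich. apply Hiff. apply nth_In. auto. }
  assert (Step : forall l ka kb, (S l < length ys)%nat -> (ka <= n)%nat -> (kb <= n)%nat ->
      nth l ys 0 = z ka -> nth (S l) ys 0 = z kb -> kb = S ka).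
  { intros l ka kb Hl' Hka Hkb E1 E2.
    assert (Hlt : nth l ys 0 < nth (S l) ys 0) by (apply rs_nth; auto).
    assert (ka < kb)%nat.
    { destruct (Nat.lt_ge_cases ka kb); auto. exfalso.
      destruct (Nat.eq_dec ka kb) as [->|]; [lra|].
      assert (z kb < z ka) by (apply Zm; lia). lra. }
    destruct (Nat.eq_dec kb (S ka)); auto. exfalso.
    assert (HI := Iint (S ka) ltac:(lia) ltac:(lia)).
    apply Hiff in HI. destruct (In_nth ys _ 0 HI) as (l' & Hl'' & E3).
    assert (z ka < z (S ka)) by (apply Zm; lia).
    assert (z (S ka) < z kb) by (apply Zm; lia).
    destruct (Nat.le_gt_cases l' l).
    + assert (nth l' ys 0 <= nth l ys 0) by (apply sorted_le; auto; lia). lra.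
    + assert (nth (S l) ys 0 <= nth l' ys 0) by (apply sorted_le; auto; lia). lra. }
  destruct (Elt i ltac:(lia)) as (k1 & Hk1 & E1).
  destruct (Elt (S i) ltac:(lia)) as (k2 & Hk2 & E2).
  destruct (Elt (S (S i)) ltac:(lia)) as (k3 & Hk3 & E3).
  assert (k2 = S k1) by (apply (Step i); auto; lia).
  assert (k3 = S k2) by (apply (Step (S i)); auto; lia).
  subst k2 k3. rewrite E1, E2, E3. rewrite !Ar by lia. ring.
Qed.

Theorem lemma4p5 (alpha beta M a b : R) (s c : list R) :
  0 < alpha -> 0 < beta -> a < b ->
  local_min alpha beta (fun x => M * x) a b s c ->
  (* (1) *)
  (M <> 0 -> b - a > 2 * Rpower (alpha / (beta * M ^ 2)) (1 / 3) ->
     (exists x, In x s) \/ (exists y, inter_pt M a b s c y)) /\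
  (* (2) *)
  (forall x, In x s ->
     sval_r s c x - M * x = M * x - sval_l s c x /\
     (0 < M -> 0 < sval_r s c x - M * x) /\
     (M < 0 -> sval_r s c x - M * x < 0)) /\
  (* (3) *)
  (forall x1 x2, In x1 s -> In x2 s -> x1 < x2 ->
     (forall z, In z s -> ~ (x1 < z < x2)) ->
     forall x, x1 < x < x2 -> sval s c x = M * (x1 + x2) / 2) /\
  (* (4) *)
  (M <> 0 -> forall ys : list R, Sorted Rlt ys ->
     (forall y, In y ys <-> inter_pt M a b s c y) ->
     forall i, (S (S i) < length ys)%nat ->
       nth (S i) ys 0 - nth i ys 0 = nth (S (S i)) ys 0 - nth (S i) ys 0).
Proof.
  intros Ha Hb Hab Hm.
  split; [exact (part1 alpha beta M a b s c Ha Hb Hab Hm)|].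
  split; [exact (part2 alpha beta M a b s c Hb Hm)|].
  split; [exact (part3 alpha beta M a b s c Hb Hm)|].
  exact (part4 alpha beta M a b s c Hb Hm).
Qed.
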